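(* Let $q$ be a prime power with $q\equiv 1\pmod 4$, $n\ge 2$, and let $M=(m_{ij})$ be an $n\times n$ matrix with entries in $\mathbb{F}_q$. (i) If $m_{ij}+m_{ji}=0$ for all $1\le i<j\le n$ and $m_{ii}=m_{11}$ for all $i$, then $\mathrm{Num}_k(M)_q=\{km_{11}\}$ for all $k\in\mathbb{F}_q$ and $0\in\mathrm{Num}'_0(M)$. (ii) If $M$ does not satisfy the hypotheses of (i), then $\mathrm{Num}_0(M)$ contains at least $(q-1)/2$ elements of $\mathbb{F}_q^*$.
   Context: The Hermitian form on $\mathbb{F}_{q^2}^n$ is $\langle u,v\rangle=\sum_i u_i^qv_i$. For an $n\times n$ matrix $M$ over $\mathbb{F}_{q^2}$: $\mathrm{Num}_0(M)=\{\langle u,Mu\rangle: u\in\mathbb{F}_{q^2}^n,\ \langle u,u\rangle=0\}$, $\mathrm{Num}'_0(M)=\{\langle u,Mu\rangle: u\in\mathbb{F}_{q^2}^n\setminus\{0\},\ \langle u,u\rangle=0\}$. For $M$ with entries in $\mathbb{F}_q$ and $k\in\mathbb{F}_q$: $\mathrm{Num}_k(M)_q=\{\langle u,Mu\rangle: u\in\mathbb{F}_q^n,\ \langle u,u\rangle=k\}$; for $u=(x_1,\dots,x_n)\in\mathbb{F}_q^n$, $\langle u,u\rangle=\sum x_i^2$ and $\langle u,Mu\rangle=\sum_{i,j}m_{ij}x_ix_j$. *)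

(* Defs.v *)
From HB Require Import structures.
From mathcomp Require Import all_boot all_order all_algebra.
Set Implicit Arguments. Unset Strict Implicit. Unset Printing Implicit Defensive.
Import GRing.Theory.
Local Open Scope ring_scope.

(* Hermitian form on L^n (L = F_{q^2}): <u,v> = sum_i u_i^q v_i *)
Definition herm (L : fieldType) (q n : nat) (u v : 'cV[L]_n) : L :=
  \sum_(i < n) (u i 0) ^+ q * v i 0.

Definition Num0 (L : finFieldType) (q n : nat) (M : 'M[L]_n) : {set L} :=
  [set herm q u (M *m u) | u in [set u : 'cV[L]_n | herm q u u == 0]].

Definition Num0' (L : finFieldType) (q n : nat) (M : 'M[L]_n) : {set L} :=
  [set herm q u (M *m u) | u in [set u : 'cV[L]_n | (u != 0) && (herm q u u == 0)]].

Definition Numk_q (F : finFieldType) (n : nat) (M : 'M[F]_n) (k : F) : {set F} :=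
  [set \sum_(i < n) \sum_(j < n) M i j * x i 0 * x j 0
     | x : 'cV[F]_n in [set x : 'cV[F]_n | \sum_(i < n) x i 0 ^+ 2 == k]].

Definition hyp_i (F : fieldType) (n : nat) (M : 'M[F]_n) : Prop :=
  (forall i j : 'I_n, (i < j)%N -> M i j + M j i = 0) /\
  (forall i j : 'I_n, M i i = M j j).

(* Main.v *)
Require Import Defs.
From HB Require Import structures.
From mathcomp Require Import all_boot all_order all_algebra all_fingroup all_solvable all_field.
From mathcomp Require Import zify ring.
Import GRing.Theory FinRing.Theory.
Local Open Scope ring_scope.
Set Implicit Arguments. Unset Strict Implicit. Unset Printing Implicit Defensive.

Lemma sqrtm1 (F : finFieldType) : (#|F| %% 4 = 1)%N -> exists i : F, i ^+ 2 = -1 /\ (2 : F) != 0.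
Proof.
move=> H4.
have /cyclicP [g Hg] := field_unit_group_cyclic [set: {unit F}]%G.
have og : #[g]%g = #|F|.-1 by rewrite /order -Hg card_finField_unit.
have q1 : (1 < #|F|)%N := finNzRing_gt1 F.
set m := (#|F|.-1 %/ 4)%N.
have Hm : #|F|.-1 = (m * 4)%N by rewrite /m divnK //; apply/dvdnP; exists (#|F| %/ 4)%N; lia.
have m0 : (0 < m)%N by rewrite /m; lia.
have o4 : #[(g ^+ m)%g]%g = 4%N by rewrite orderXdiv og ?Hm ?dvdn_mulr // mulKn.
pose w : F := val (g ^+ m)%g.
have w4 : w ^+ 4 = 1.
  by rewrite /w -val_unitX -o4 expg_order.
have w2 : w ^+ 2 != 1.
  apply/negP => /eqP h.
  have : (#[(g ^+ m)%g]%g %| 2)%N.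
    by rewrite order_dvdn; apply/eqP/val_inj; rewrite val_unitX h.
  by rewrite o4.
have hw : w ^+ 2 = -1.
  have : (w ^+ 2 - 1) * (w ^+ 2 + 1) = 0.
    by rewrite mulrDr mulr1 mulrBl mul1r -exprD w4 addrA subrK subrr.
  by move/eqP; rewrite mulf_eq0 subr_eq0 (negbTE w2) /= addr_eq0 => /eqP.
exists w; split => //.
apply/eqP => h2; move: w2; rewrite hw.
have -> : (-1 : F) = 1 by apply/eqP; rewrite eq_sym -addr_eq0 -h2.
by rewrite eqxx.
Qed.

Section H.
Variables (F : finFieldType) (n : nat).
Implicit Types (M : 'M[F]_n) (x : 'cV[F]_n).

Definition Qf M x : F := \sum_(i < n) \sum_(j < n) M i j * x i 0 * x j 0.
Definition S2 x : F := \sum_(i < n) x i 0 ^+ 2.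

Lemma sum2 {i j : 'I_n} {g : 'I_n -> F} : i != j ->
  (forall l, l != i -> l != j -> g l = 0) -> \sum_l g l = g i + g j.
Proof.
move=> ij H; rewrite (bigD1 i) //= (bigD1 j) 1?eq_sym //= big1 ?addr0 //.
by move=> l /andP[li lj]; apply: H.
Qed.

Definition v2 (i j : 'I_n) (a b : F) : 'cV[F]_n :=
  \col_l (if l == i then a else if l == j then b else 0).

Lemma v2E i j a b l : v2 i j a b l 0 = (if l == i then a else if l == j then b else 0).
Proof. by rewrite /v2 mxE. Qed.

Lemma S2_v2 i j a b : i != j -> S2 (v2 i j a b) = a ^+ 2 + b ^+ 2.
Proof.
move=> ij; rewrite /S2 (sum2 ij).
  have ji : j != i by rewrite eq_sym.
  by rewrite !v2E eqxx (negbTE ji) eqxx.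
by move=> l li lj; rewrite v2E (negbTE li) (negbTE lj) expr0n.
Qed.

Lemma Q_v2 M i j a b : i != j -> Qf M (v2 i j a b) =
   M i i * a ^+ 2 + M j j * b ^+ 2 + (M i j + M j i) * a * b.
Proof.
move=> ij; have ji : j != i by rewrite eq_sym.
rewrite /Qf (sum2 ij).
  rewrite (sum2 ij).
    rewrite (sum2 ij).
      by rewrite !v2E eqxx (negbTE ji) eqxx; ring.
    by move=> l li lj; rewrite !v2E (negbTE li) (negbTE lj) mulr0.
  by move=> l li lj; rewrite !v2E (negbTE li) (negbTE lj) mulr0.
move=> l li lj; apply: big1 => m _.
by rewrite !v2E (negbTE li) (negbTE lj) mulr0 mul0r.
Qed.

Lemma Q_skew M (m : F) x : (2 : F) != 0 ->
  (forall i j : 'I_n, (i < j)%N -> M i j + M j i = 0) ->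
  (forall i, M i i = m) -> Qf M x = m * S2 x.
Proof.
move=> two Hs Hd.
have H2 : Qf M x + Qf M x = 2 * (m * S2 x).
  rewrite {2}/Qf exchange_big /= /Qf -big_split /= /S2 mulr_sumr mulr_sumr.
  apply: eq_bigr => i _; rewrite -big_split /= (bigD1 i) //= big1.
    by rewrite Hd addr0; ring.
  move=> j ji; have -> : M i j * x i 0 * x j 0 + M j i * x j 0 * x i 0 = (M i j + M j i) * (x i 0 * x j 0) by ring.
  case: (ltngtP i j) => [lt|gt|eq].
  - by rewrite Hs // !mul0r.
  - by rewrite addrC Hs // !mul0r.
  - by move: ji; rewrite (val_inj eq) eqxx.
have : 2 * (Qf M x - m * S2 x) = 0 by rewrite mulrBr -H2; ring.
by move/eqP; rewrite mulf_eq0 (negbTE two) subr_eq0 => /eqP.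
Qed.

End H.

Section L.
Variables (F L : finFieldType) (iota : {rmorphism F -> L}) (n q : nat).
Hypothesis hq : #|F| = q.

Lemma iotaX a : iota a ^+ q = iota a.
Proof. by rewrite -rmorphXn -hq expf_card. Qed.

Lemma herm_uu (x : 'cV[F]_n) : herm q (map_mx iota x) (map_mx iota x) = iota (S2 x).
Proof.
rewrite /herm /S2 rmorph_sum; apply: eq_bigr => i _.
by rewrite mxE iotaX rmorphXn expr2.
Qed.

Lemma herm_uMu (M : 'M[F]_n) (x : 'cV[F]_n) :
  herm q (map_mx iota x) (map_mx iota M *m map_mx iota x) = iota (Qf M x).
Proof.
rewrite /herm /Qf -map_mxM rmorph_sum; apply: eq_bigr => i _.
rewrite !mxE iotaX -rmorphM mulr_sumr; congr (iota _); apply: eq_bigr => j _.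
by ring.
Qed.
End L.

Theorem corollary4 (q n : nat) (F L : finFieldType) (iota : {rmorphism F -> L})
    (M : 'M[F]_n) :
  #|F| = q -> #|L| = (q ^ 2)%N -> (q %% 4 = 1)%N -> (2 <= n)%N ->
  (hyp_i M ->
     (forall (i : 'I_n) (k : F), Numk_q M k = [set k * M i i]) /\
     (0 : L) \in Num0' q (map_mx iota M)) /\
  (~ hyp_i M ->
     leq ((q - 1) %/ 2)%N #|[set a : F | (a != 0) && (iota a \in Num0 q (map_mx iota M))]|).
Proof.
move=> hF hL h4 hn.
have [iF [hi two]] := sqrtm1 (etrans (congr1 (modn^~ 4) hF) h4).
have n0 : (0 < n)%N by lia.
have n1 : (1 < n)%N by lia.
pose i0 : 'I_n := Ordinal n0.
pose i1 : 'I_n := Ordinal n1.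
have i01 : i0 != i1 by [].
split.
  move=> [Hs Hd].
  have HQ : forall (i : 'I_n) x, Qf M x = M i i * S2 x.
    by move=> i x; apply: Q_skew => // l; apply: Hd.
  split.
    move=> i k; apply/setP => y; rewrite !inE; apply/imsetP/eqP.
      case=> x; rewrite inE => /eqP Sx ->.
      by rewrite -/(Qf M x) (HQ i) /S2 Sx mulrC.
    move=> ->.
    exists (v2 i0 i1 ((k + 1) / 2) (iF * ((k - 1) / 2))).
      rewrite inE -/(S2 _) S2_v2 // [(iF * _) ^+ 2]exprMn hi; apply/eqP; field => //.
    by rewrite -/(Qf M _) (HQ i) S2_v2 // [(iF * _) ^+ 2]exprMn hi mulrC; congr (_ * _); field.
  apply/imsetP; exists (map_mx iota (v2 i0 i1 1 iF)).
    rewrite inE; apply/andP; split.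
      apply/eqP => h; have := congr1 (fun u : 'cV[L]_n => u i0 0) h.
      by rewrite /= !mxE eqxx rmorph1 => /eqP; rewrite oner_eq0.
    by rewrite herm_uu // S2_v2 // expr1n hi addrN rmorph0.
  by rewrite herm_uMu // (HQ i0) S2_v2 // expr1n hi addrN mulr0 rmorph0.
move=> nH.
have [i [j [ij Hc]]] : exists i j : 'I_n, i != j /\ ~~ ((M i i == M j j) && (M i j + M j i == 0)).
  case: (boolP [exists i, exists j, (i != j) && ~~ ((M i i == M j j) && (M i j + M j i == 0))]).
    by move=> /existsP [i /existsP [j /andP [ij h]]]; exists i, j.
  rewrite negb_exists => /forallP H; exfalso; apply: nH; split.
    move=> i j lt; have := H i; rewrite negb_exists => /forallP /(_ j).
    rewrite negb_and !negbK => /orP [/eqP h|/andP [_ /eqP //]].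
    by rewrite h ltnn in lt.
  move=> i j; case: (eqVneq i j) => [->//|ij].
  have := H i; rewrite negb_exists => /forallP /(_ j).
  by rewrite ij /= negbK => /andP [/eqP ->].
set d := M i i - M j j; set s := M i j + M j i.
have [e [he hc]] : exists e : F, e ^+ 2 = -1 /\ d + e * s != 0.
  case: (eqVneq (d + iF * s) 0) => h1; last by exists iF.
  exists (- iF); split; first by rewrite sqrrN hi.
  apply/eqP => h2; apply: (negP Hc).
  have : (d + iF * s) - (d + - iF * s) = 2 * iF * s by ring.
  rewrite h1 h2 subrr => /esym /eqP; rewrite !mulf_eq0 (negbTE two) /=.
  case/orP => [/eqP iF0|/eqP s0].
    by move: hi; rewrite iF0 expr0n /= => /eqP; rewrite eq_sym oppr_eq0 oner_eq0.
  move: h1; rewrite s0 mulr0 addr0 => /eqP; rewrite subr_eq0 => ->.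
  by rewrite -/s s0 eqxx.
pose c := d + e * s.
pose f := fun a : F => c * a ^+ 2.
pose A := [set a : F | a != 0].
pose B := f @: A.
have sub : B \subset [set a : F | (a != 0) && (iota a \in Num0 q (map_mx iota M))].
  apply/subsetP => y /imsetP [a a0 ->]; move: a0; rewrite /A inE => a0.
  rewrite inE /f mulf_neq0 ?expf_neq0 //=.
  apply/imsetP; exists (map_mx iota (v2 i j a (e * a))).
    by rewrite inE herm_uu // S2_v2 // exprMn he mulN1r addrN rmorph0.
  rewrite herm_uMu // Q_v2 //; congr (iota _).
  by rewrite exprMn he /f /c /d /s; ring.
have cardA : #|A| = #|F|.-1.
  by rewrite -(cardC1 0); apply: eq_card => a; rewrite inE.
have key : (#|A| <= 2 * #|B|)%N.
  pose r b := odflt 0 [pick a in A | f a == b].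
  have : A \subset (r @: B) :|: ((fun b => - r b) @: B).
    apply/subsetP => a aA.
    have fB : f a \in B by apply: imset_f.
    have [rA fr] : r (f a) \in A /\ f (r (f a)) = f a.
      rewrite /r; case: pickP => [a' /andP[h1 /eqP h2]|/(_ a)] //=.
      by rewrite aA eqxx.
    have : r (f a) ^+ 2 = a ^+ 2 by apply: (mulfI hc).
    move/eqP; rewrite -subr_eq0 subr_sqr mulf_eq0 subr_eq0 addr_eq0.
    case/orP => /eqP h; rewrite inE; apply/orP.
      by left; apply/imsetP; exists (f a).
    by right; apply/imsetP; exists (f a) => //; rewrite h opprK.
  move/subset_leq_card => h.
  apply: (leq_trans h); apply: (leq_trans (leq_card_setU _ _)).
  by rewrite mul2n -addnn leq_add // leq_imset_card.
have := subset_leq_card sub.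
move: key; rewrite cardA hF; lia.
Qed.
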